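(* For all integers $n\ge2$ and $1\le p\le n-1$, $$2|\mathbb{S}^n|\ >\ \Big|\mathbb{S}^p\big(\sqrt{p/n}\big)\times\mathbb{S}^{n-p}\big(\sqrt{(n-p)/n}\big)\Big|\ \ge\ \Big|\mathbb{S}^{\lfloor n/2\rfloor}\big(\sqrt{\lfloor n/2\rfloor/n}\big)\times\mathbb{S}^{\lceil n/2\rceil}\big(\sqrt{\lceil n/2\rceil/n}\big)\Big|.$$
   Context: $\mathbb{S}^d(R)$ denotes the round $d$-sphere of radius $R$, $\mathbb{S}^d=\mathbb{S}^d(1)$, and $|\cdot|$ denotes $n$-dimensional volume; $|\mathbb{S}^d|=2\pi^{(d+1)/2}/\Gamma(\tfrac{d+1}{2})$. *)

(* Defs.v *)
From Stdlib Require Import Reals Lra Lia.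
Open Scope R_scope.

(* Gamma at half-integers: half_gamma m = Gamma(m/2) for m >= 1.
   Determined by Gamma(1/2) = sqrt PI, Gamma(1) = 1, Gamma(x+1) = x Gamma(x).
   (Stdlib has no Gamma function; value at m = 0 is a dummy, never used.) *)
Fixpoint half_gamma (m : nat) : R :=
  match m with
  | O => 1
  | S O => sqrt PI
  | S (S O) => 1
  | S (S k as m') => (INR k / 2) * half_gamma k
  end.

(* |S^d| = 2 pi^((d+1)/2) / Gamma((d+1)/2) *)
Definition sphere_vol (d : nat) : R :=
  2 * Rpower PI (INR (d + 1) / 2) / half_gamma (d + 1).

(* |S^d(R)| = R^d |S^d|  (d-dimensional volume scales by R^d) *)
Definition sphere_vol_r (d : nat) (r : R) : R := r ^ d * sphere_vol d.

Definition prod_sphere_vol (p : nat) (r1 : R) (q : nat) (r2 : R) : R :=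
  sphere_vol_r p r1 * sphere_vol_r q r2.

Definition clifford_vol (n p : nat) : R :=
  prod_sphere_vol p (sqrt (INR p / INR n)) (n - p) (sqrt (INR (n - p) / INR n)).

(* Main.v *)
Require Import Defs.
From Stdlib Require Import Reals Lra Lia ZArith.
From Coquelicot Require Import Coquelicot.
Open Scope R_scope.

Lemma nonneg2 (h h1 h2 : R -> R) (T : R) :
  (forall t, 0 <= t <= T -> derivable_pt_lim h t (h1 t)) ->
  (forall t, 0 <= t <= T -> derivable_pt_lim h1 t (h2 t)) ->
  (forall t, 0 <= t <= T -> 0 <= h2 t) ->
  h 0 = 0 -> h1 0 = 0 -> forall t, 0 <= t <= T -> 0 <= h t.
Proof.
  intros Hd1 Hd2 Hp H0 H10.
  assert (K1 : forall t, 0 <= t <= T -> 0 <= h1 t).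
  { intros t Ht. destruct (Req_dec t 0) as [->|Hne]; [lra|].
    destruct (MVT_cor2 h1 h2 0 t) as [c [Hc1 Hc2]]; [lra| |].
    - intros c Hc. apply Hd2. lra.
    - assert (0 <= h2 c) by (apply Hp; lra). nra. }
  intros t Ht. destruct (Req_dec t 0) as [->|Hne]; [lra|].
  destruct (MVT_cor2 h h1 0 t) as [c [Hc1 Hc2]]; [lra| |].
  - intros c Hc. apply Hd1. lra.
  - assert (0 <= h1 c) by (apply K1; lra). nra.
Qed.

Definition Mf (t : R) := (2+6*t)*ln(1+2*t) + (1-t)*ln(1-t) - (1+3*t)*ln(1+3*t) - 4*t*ln(1+t).
Definition M1 (t : R) := 6*ln(1+2*t) + 2*(2+6*t)/(1+2*t) - ln(1-t) - (1-t)/(1-t)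
   - 3*ln(1+3*t) - 3*(1+3*t)/(1+3*t) - 4*ln(1+t) - 4*t/(1+t).
Definition M2 (t : R) := 12/(1+2*t) + 4/(1+2*t)^2 + 1/(1-t) - 9/(1+3*t) - 4/(1+t) - 4/(1+t)^2.

Lemma Mf_nonneg t : 0 <= t <= 1/2 -> 0 <= Mf t.
Proof.
  apply (nonneg2 Mf M1 M2 (1/2)).
  - intros s Hs. apply is_derive_Reals. unfold Mf, M1. auto_derive.
    + repeat split; lra.
    + replace (1 + - s) with (1 - s) by ring. field. repeat split; lra.
  - intros s Hs. apply is_derive_Reals. unfold M1, M2. auto_derive.
    + repeat split; lra.
    + try replace (1 + - s) with (1 - s) by ring. field. repeat split; lra.
  - intros s Hs. unfold M2.
    replace (12/(1+2*s) + 4/(1+2*s)^2 + 1/(1-s) - 9/(1+3*s) - 4/(1+s) - 4/(1+s)^2)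
      with ((40*s^3 + 80*s^4 + 24*s^5) / ((1+2*s)^2*(1-s)*(1+3*s)*(1+s)^2)) by (field; lra).
    apply Rdiv_le_0_compat.
    + assert (0 <= s^3) by (apply pow_le; lra). assert (0 <= s^4) by (apply pow_le; lra).
      assert (0 <= s^5) by (apply pow_le; lra). lra.
    + assert (0 < (1+2*s)^2) by (apply pow_lt; lra). assert (0 < (1+s)^2) by (apply pow_lt; lra).
      assert (0 < 1 - s) by lra. assert (0 < 1 + 3*s) by lra.
      repeat apply Rmult_lt_0_compat; lra.
  - unfold Mf. replace (1+2*0) with 1 by ring. replace (1-0) with 1 by ring.
    replace (1+3*0) with 1 by ring. replace (1+0) with 1 by ring. rewrite ln_1. ring.
  - unfold M1. replace (1+2*0) with 1 by ring. replace (1-0) with 1 by ring.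
    replace (1+3*0) with 1 by ring. replace (1+0) with 1 by ring. rewrite ln_1. field.
Qed.

Definition Nf (t : R) := (1+3*t)*ln(1+3*t) - (1+4*t)*ln(1+2*t) + (t-1)*ln(1+t).
Definition N1 (t : R) := 3*ln(1+3*t) + 3*(1+3*t)/(1+3*t) - 4*ln(1+2*t) - 2*(1+4*t)/(1+2*t)
  + ln(1+t) + (t-1)/(1+t).
Definition N2 (t : R) := 9/(1+3*t) - 8/(1+2*t) - 4/(1+2*t)^2 + 1/(1+t) + 2/(1+t)^2.

Lemma Nf_nonneg t : 0 <= t <= 1 -> 0 <= Nf t.
Proof.
  apply (nonneg2 Nf N1 N2 1).
  - intros s Hs. apply is_derive_Reals. unfold Nf, N1. auto_derive.
    + repeat split; lra.
    + field. repeat split; lra.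
  - intros s Hs. apply is_derive_Reals. unfold N1, N2. auto_derive.
    + repeat split; lra.
    + field. repeat split; lra.
  - intros s Hs. unfold N2.
    replace (9/(1+3*s) - 8/(1+2*s) - 4/(1+2*s)^2 + 1/(1+s) + 2/(1+s)^2)
      with ((8*s^2 + 12*s^3) / ((1+3*s)*(1+2*s)^2*(1+s)^2)) by (field; lra).
    apply Rdiv_le_0_compat.
    + assert (0 <= s^2) by (apply pow_le; lra). assert (0 <= s^3) by (apply pow_le; lra). lra.
    + assert (0 < (1+2*s)^2) by (apply pow_lt; lra). assert (0 < (1+s)^2) by (apply pow_lt; lra).
      assert (0 < 1 + 3*s) by lra.
      repeat apply Rmult_lt_0_compat; lra.
  - unfold Nf. replace (1+2*0) with 1 by ring.
    replace (1+3*0) with 1 by ring. replace (1+0) with 1 by ring. rewrite ln_1. ring.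
  - unfold N1. replace (1+2*0) with 1 by ring.
    replace (1+3*0) with 1 by ring. replace (1+0) with 1 by ring. rewrite ln_1. field.
Qed.

Lemma lnshift x c : 0 < x -> 0 < x + c -> ln (x + c) = ln x + ln (1 + c * / x).
Proof.
  intros Hx Hxc. rewrite <- ln_mult; [|lra|].
  - f_equal. field. lra.
  - replace (1 + c * / x) with ((x + c) / x) by (field; lra). apply Rdiv_lt_0_compat; lra.
Qed.

Definition Fr (x : R) := (x+2)*ln(x+2) - x*ln x - 2*ln(x+1).

Lemma Fr_mono x : 1 <= x -> Fr x <= Fr (x+1).
Proof.
  intros Hx.
  assert (HN := Nf_nonneg (/ x)).
  assert (0 < /x) by (apply Rinv_0_lt_compat; lra).
  assert (/x <= 1) by (rewrite <- Rinv_1; apply Rinv_le_contravar; lra).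
  specialize (HN (conj (Rlt_le _ _ H) H0)).
  unfold Fr, Nf in *.
  replace (x+1+2) with (x+3) by ring. replace (x+1+1) with (x+2) by ring.
  rewrite (lnshift x 3), (lnshift x 2), (lnshift x 1); try lra.
  replace (ln (1 + 3 * / x)) with (ln (1 + 3 * / x)) by reflexivity.
  assert (E: Fr (x+1) - Fr x = x * ((1 + 3 * / x) * ln (1 + 3 * / x) - (1 + 4 * / x) * ln (1 + 2 * / x) +
     (/ x - 1) * ln (1 + / x))).
  { unfold Fr. replace (x+1+2) with (x+3) by ring. replace (x+1+1) with (x+2) by ring.
    rewrite (lnshift x 3), (lnshift x 2), (lnshift x 1); try lra.
    replace (1 * / x) with (/ x) by ring. field. lra. }
  unfold Fr in E. replace (x+1+2) with (x+3) in E by ring. replace (x+1+1) with (x+2) in E by ring.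
  rewrite (lnshift x 3), (lnshift x 2), (lnshift x 1) in E; try lra.
  nra.
Qed.

Lemma Fr_conc x : 2 <= x -> Fr (x-1) + Fr (x+1) <= 2 * Fr x.
Proof.
  intros Hx.
  assert (HM := Mf_nonneg (/ x)).
  assert (0 < /x) by (apply Rinv_0_lt_compat; lra).
  assert (/x <= 1/2) by (replace (1/2) with (/2) by field; apply Rinv_le_contravar; lra).
  specialize (HM (conj (Rlt_le _ _ H) H0)).
  assert (E: 2 * Fr x - Fr (x-1) - Fr (x+1) = x * Mf (/ x)).
  { unfold Fr, Mf. replace (x-1+2) with (x+1) by ring. replace (x-1+1) with x by ring.
    replace (x+1+2) with (x+3) by ring. replace (x+1+1) with (x+2) by ring.
    replace (x-1) with (x + -1) by ring.
    rewrite (lnshift x 3), (lnshift x 2), (lnshift x 1), (lnshift x (-1)); try lra.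
    replace (1 - / x) with (1 + -1 * / x) by ring.
    replace (1 + / x) with (1 + 1 * / x) by ring.
    field. lra. }
  nra.
Qed.


Definition Is (k : nat) := RInt (fun x => sin x ^ k) 0 (PI/2).

Lemma ex_Is k : ex_RInt (fun x => sin x ^ k) 0 (PI/2).
Proof.
  apply (ex_RInt_continuous (V:=R_CompleteNormedModule)). intros z _. apply (@ex_derive_continuous R_AbsRing R_NormedModule). auto_derive. auto.
Qed.

Lemma Is_0 : Is 0 = PI/2.
Proof.
  unfold Is. apply is_RInt_unique.
  apply (is_RInt_ext (fun _ => 1)). { intros; simpl; auto. }
  replace (PI/2) with (minus (PI/2) 0) at 2 by (unfold minus, plus, opp; simpl; ring).
  apply (is_RInt_derive (V:=R_CompleteNormedModule) (fun x => x) (fun _ => 1)).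
  - intros x _. auto_derive; auto.
  - intros x _. apply continuous_const.
Qed.

Lemma Is_1 : Is 1 = 1.
Proof.
  unfold Is. apply is_RInt_unique.
  apply (is_RInt_ext sin). { intros; simpl; ring. }
  assert (H : is_RInt sin 0 (PI/2) (minus (- cos (PI/2)) (- cos 0))).
  { apply (is_RInt_derive (V:=R_CompleteNormedModule) (fun x => - cos x) sin).
    - intros x _. auto_derive; auto. ring.
    - intros x _. apply (@ex_derive_continuous R_AbsRing R_NormedModule). auto_derive. auto. }
  assert (E : minus (- cos (PI/2)) (- cos 0) = 1).
  { rewrite cos_PI2, cos_0. unfold minus, plus, opp; simpl. ring. }
  rewrite E in H. exact H.
Qed.

Lemma Is_rec k : INR (S (S k)) * Is (S (S k)) = INR (S k) * Is k.
Proof.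
  set (df := fun x => INR (S k) * sin x ^ k - INR (S (S k)) * sin x ^ (S (S k))).
  assert (H1 : is_RInt df 0 (PI/2) (minus (sin (PI/2) ^ (S k) * cos (PI/2)) (sin 0 ^ (S k) * cos 0))).
  { apply (is_RInt_derive (V:=R_CompleteNormedModule) (fun x => sin x ^ (S k) * cos x) df).
    - intros x _. unfold df. auto_derive; auto.
      change (match k with 0%nat => 1 | S _ => INR k + 1 end) with (INR (S k)).
      assert (Hc : cos x * cos x = 1 - sin x * sin x) by (pose proof (sin2_cos2 x); unfold Rsqr in *; lra).
      simpl pow. apply Rminus_diag_uniq.
      transitivity (INR (S k) * sin x ^ k * (cos x * cos x - (1 - sin x * sin x))).
      + rewrite (S_INR (S k)). ring.
      + rewrite Hc. ring.
    - intros x _. apply (@ex_derive_continuous R_AbsRing R_NormedModule). unfold df. auto_derive. auto. }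
  assert (E : minus (sin (PI/2) ^ (S k) * cos (PI/2)) (sin 0 ^ (S k) * cos 0) = 0).
  { rewrite cos_PI2, sin_0. unfold minus, plus, opp; simpl. ring. }
  rewrite E in H1.
  assert (H2 : is_RInt df 0 (PI/2) (INR (S k) * Is k - INR (S (S k)) * Is (S (S k)))).
  { apply (is_RInt_ext (fun x => minus (scal (INR (S k)) (sin x ^ k)) (scal (INR (S (S k))) (sin x ^ (S (S k)))))).
    { intros x _. unfold df, minus, plus, opp, scal; simpl. unfold mult; simpl. ring. }
    replace (INR (S k) * Is k - INR (S (S k)) * Is (S (S k))) with
      (minus (scal (INR (S k)) (Is k)) (scal (INR (S (S k))) (Is (S (S k))))).
    2: { reflexivity. }
    apply (is_RInt_minus (V:=R_CompleteNormedModule) (fun x => scal (INR (S k)) (sin x ^ k)) (fun x => scal (INR (S (S k))) (sin x ^ (S (S k))))).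
    - apply (is_RInt_scal (V:=R_CompleteNormedModule) (fun x => sin x ^ k)). apply RInt_correct. apply ex_Is.
    - apply (is_RInt_scal (V:=R_CompleteNormedModule) (fun x => sin x ^ (S (S k)))). apply RInt_correct. apply ex_Is. }
  pose proof (is_RInt_unique _ _ _ _ H1) as U1. pose proof (is_RInt_unique _ _ _ _ H2) as U2.
  rewrite U1 in U2. lra.
Qed.

Lemma Is_decr k : Is (S k) <= Is k.
Proof.
  unfold Is. apply RInt_le.
  - pose proof PI_RGT_0; lra.
  - apply ex_Is.
  - apply ex_Is.
  - intros x Hx. simpl. assert (0 < sin x) by (apply sin_gt_0; pose proof PI_RGT_0; lra).
    assert (sin x <= 1) by apply SIN_bound.
    assert (0 <= sin x ^ k) by (apply pow_le; lra). nra.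
Qed.

Lemma hg_rec k : half_gamma (S (S (S k))) = INR (S k) / 2 * half_gamma (S k).
Proof. reflexivity. Qed.

Lemma hg_pos m : (1 <= m)%nat -> 0 < half_gamma m.
Proof.
  intros Hm.
  assert (H : forall j, 0 < half_gamma (S j) /\ 0 < half_gamma (S (S j))).
  { induction j as [|j [IH1 IH2]].
    - split; simpl. apply sqrt_lt_R0, PI_RGT_0. lra.
    - split; [exact IH2|]. rewrite hg_rec. apply Rmult_lt_0_compat; [|exact IH1].
      apply Rdiv_lt_0_compat; [apply lt_0_INR; lia|lra]. }
  destruct m as [|m]; [lia|]. exact (proj1 (H m)).
Qed.

Lemma Is_G k : Is k = sqrt PI / 2 * half_gamma (S k) / half_gamma (S (S k)).
Proof.
  assert (Hs : sqrt PI * sqrt PI = PI) by (apply sqrt_sqrt; pose proof PI_RGT_0; lra).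
  assert (Hs0 : 0 < sqrt PI) by (apply sqrt_lt_R0, PI_RGT_0).
  assert (H : forall j, Is j = sqrt PI / 2 * half_gamma (S j) / half_gamma (S (S j)) /\
                        Is (S j) = sqrt PI / 2 * half_gamma (S (S j)) / half_gamma (S (S (S j)))).
  { induction j as [|j [IH1 IH2]].
    - split.
      + rewrite Is_0. simpl. rewrite <- Hs at 1. field.
      + rewrite Is_1. rewrite hg_rec. simpl. field. lra.
    - split; [exact IH2|].
      assert (Hr := Is_rec j).
      assert (P1 := hg_pos (S j) ltac:(lia)). assert (P2 := hg_pos (S (S j)) ltac:(lia)).
      assert (Hn : 0 < INR (S (S j))) by (apply lt_0_INR; lia).
      assert (Is (S (S j)) = INR (S j) / INR (S (S j)) * Is j).
      { apply (Rmult_eq_reg_l (INR (S (S j)))); [|lra]. rewrite Hr. field. lra. }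
      rewrite H, IH1. rewrite (hg_rec (S j)), (hg_rec j). match goal with |- ?a = ?b => change (@eq R a b) end. field.
      repeat split; try lra. }
  exact (proj1 (H k)).
Qed.

Lemma G_logconv k : half_gamma (S (S k)) * half_gamma (S (S k)) <= half_gamma (S k) * half_gamma (S (S (S k))).
Proof.
  assert (H := Is_decr k). rewrite !Is_G in H.
  assert (Hs0 : 0 < sqrt PI) by (apply sqrt_lt_R0, PI_RGT_0).
  assert (P1 := hg_pos (S k) ltac:(lia)). assert (P2 := hg_pos (S (S k)) ltac:(lia)).
  assert (P3 := hg_pos (S (S (S k))) ltac:(lia)).
  set (A := half_gamma (S k)) in *. set (B := half_gamma (S (S k))) in *. set (C := half_gamma (S (S (S k)))) in *.
  assert (H' : B / C <= A / B).
  { apply (Rmult_le_reg_l (sqrt PI / 2)); [lra|]. unfold Rdiv in *. lra. }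
  apply (Rmult_le_compat_r (B * C)) in H'; [|nra].
  replace (B / C * (B * C)) with (B * B) in H' by (field; lra).
  replace (A / B * (B * C)) with (A * C) in H' by (field; lra).
  exact H'.
Qed.


Lemma ln_le_mono x y : 0 < x -> x <= y -> ln x <= ln y.
Proof. intros Hx Hxy. destruct (Req_dec x y) as [->|Hne]; [lra|]. left; apply ln_increasing; lra. Qed.

Lemma exp_le_mono x y : x <= y -> exp x <= exp y.
Proof. intros Hxy. destruct (Req_dec x y) as [->|Hne]; [lra|]. left; apply exp_increasing; lra. Qed.

Lemma ln_le_sub1 x : 0 < x -> ln x <= x - 1.
Proof. intros Hx. pose proof (exp_ineq1_le (ln x)). rewrite exp_ln in H; lra. Qed.

Lemma ln_lt_sub1 x : 0 < x -> x <> 1 -> ln x < x - 1.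
Proof.
  intros Hx H1. assert (ln x <> 0).
  { intro E. apply H1. rewrite <- (exp_ln x Hx), E. apply exp_0. }
  pose proof (exp_ineq1 (ln x) H). rewrite exp_ln in H0; lra.
Qed.

Lemma ln_div' a b : 0 < a -> 0 < b -> ln (a / b) = ln a - ln b.
Proof.
  intros Ha Hb. unfold Rdiv. rewrite ln_mult, ln_Rinv; try lra.
  apply Rinv_0_lt_compat; lra.
Qed.

Lemma ln_diff_ge a b : 0 < a -> 0 < b -> 1 - b / a <= ln a - ln b.
Proof.
  intros Ha Hb. rewrite <- ln_div'; auto.
  assert (H := ln_le_sub1 (b / a) ltac:(apply Rdiv_lt_0_compat; lra)).
  rewrite ln_div' in H; auto. rewrite ln_div'; auto. lra.
Qed.

Lemma ln_sqrtPI : ln (sqrt PI) = ln PI / 2.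
Proof.
  rewrite <- (Rpower_sqrt PI PI_RGT_0). rewrite ln_Rpower. field.
Qed.

Definition g (k : nat) := ln (half_gamma (S k)).
Definition Lam (k : nat) := INR k / 2 * ln (INR k) - g k.

Lemma g_rec k : g (S (S k)) = ln (INR (S k)) - ln 2 + g k.
Proof.
  unfold g. rewrite hg_rec. assert (P := hg_pos (S k) ltac:(lia)).
  assert (0 < INR (S k)) by (apply lt_0_INR; lia).
  rewrite ln_mult, ln_div'; try lra. all: apply Rdiv_lt_0_compat; lra.
Qed.

Lemma g_conv k : 2 * g (S k) <= g k + g (S (S k)).
Proof.
  unfold g. assert (H := G_logconv k).
  assert (P1 := hg_pos (S k) ltac:(lia)). assert (P2 := hg_pos (S (S k)) ltac:(lia)).
  assert (P3 := hg_pos (S (S (S k))) ltac:(lia)).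
  apply ln_le_mono in H; [|nra]. rewrite !ln_mult in H; lra.
Qed.

Lemma g_1 : g 1 = 0.
Proof. unfold g. simpl. apply ln_1. Qed.

Lemma g_2 : g 2 = ln PI / 2 - ln 2.
Proof.
  unfold g. change (half_gamma 3) with (INR 1 / 2 * sqrt PI). simpl INR.
  assert (0 < sqrt PI) by (apply sqrt_lt_R0, PI_RGT_0).
  rewrite ln_mult, ln_div', ln_1, ln_sqrtPI; lra.
Qed.

Lemma Lam_1 : Lam 1 = 0.
Proof. unfold Lam. rewrite g_1. simpl. rewrite ln_1. ring. Qed.

Lemma Lam_2 : Lam 2 = 2 * ln 2 - ln PI / 2.
Proof. unfold Lam. rewrite g_2. replace (INR 2) with 2 by (simpl; ring). field. Qed.

Definition delta (k : nat) := Lam (S (S k)) - Lam k.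

Lemma delta_Fr k : delta k = Fr (INR k) / 2 + ln 2.
Proof.
  unfold delta, Lam, Fr. rewrite g_rec. rewrite !S_INR.
  replace (INR k + 1 + 1) with (INR k + 2) by ring. field.
Qed.

Lemma delta_mono k d : (1 <= k)%nat -> delta k <= delta (k + d).
Proof.
  intros Hk. induction d as [|d IH].
  - rewrite Nat.add_0_r. lra.
  - rewrite Nat.add_succ_r. rewrite !delta_Fr in *. rewrite S_INR.
    assert (1 <= INR (k + d)) by (apply (le_INR 1); lia).
    pose proof (Fr_mono (INR (k + d)) H). lra.
Qed.

Definition Sfun (n p : nat) := Lam p + Lam (n - p).

Lemma step2 n p : (1 <= p)%nat -> (2*p+2 <= n)%nat -> Sfun n (p+2) <= Sfun n p.
Proof.
  intros H1 H2. unfold Sfun.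
  set (q := (n - p - 2)%nat).
  replace (n - p)%nat with (S (S q)) by (unfold q; lia).
  replace (n - (p+2))%nat with q by (unfold q; lia).
  replace (p+2)%nat with (S (S p)) by lia.
  assert (Hm := delta_mono p (q - p) H1).
  replace (p + (q - p))%nat with q in Hm by (unfold q; lia).
  unfold delta in Hm. lra.
Qed.

Definition Dc (m : nat) := Lam m + Lam (S (S m)) - 2 * Lam (S m).

Lemma Dc_step m : (1 <= m)%nat -> Dc (S (S m)) <= Dc m.
Proof.
  intros Hm.
  assert (E : Dc (S (S m)) - Dc m = delta m + delta (S (S m)) - 2 * delta (S m)).
  { unfold Dc, delta. ring. }
  rewrite !delta_Fr in E. rewrite !S_INR in E.
  assert (1 <= INR m) by (apply (le_INR 1); lia).
  pose proof (Fr_conc (INR m + 1) ltac:(lra)).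
  replace (INR m + 1 - 1) with (INR m) in H0 by ring.
  replace (INR m + 1 + 1) with (INR m + 1 + 1) in H0 by ring.
  lra.
Qed.

Lemma Dc_low m : (1 <= m)%nat -> ln (INR m) - ln (INR m + 1) <= Dc m.
Proof.
  intros Hm. destruct m as [|j]; [lia|].
  assert (Hc := g_conv j). assert (Hr1 := g_rec j). assert (Hr2 := g_rec (S j)).
  unfold Dc, Lam. rewrite Hr2.
  set (y := INR (S (S j))).
  assert (Ey1 : INR (S (S (S j))) = y + 1) by (unfold y; rewrite (S_INR (S (S j))); ring).
  assert (Ey0 : INR (S j) = y - 1) by (unfold y; rewrite (S_INR (S j)); ring).
  rewrite Ey1, Ey0. rewrite Ey0 in Hr1.
  assert (Hy : 2 <= y) by (unfold y; rewrite !S_INR; pose proof (pos_INR j); lra).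
  assert (A1 := ln_diff_ge (y+1) y ltac:(lra) ltac:(lra)).
  assert (A2 := ln_diff_ge (y-1) y ltac:(lra) ltac:(lra)).
  replace (1 - y / (y+1)) with (/(y+1)) in A1 by (field; lra).
  replace (1 - y / (y-1)) with (- /(y-1)) in A2 by (field; lra).
  assert (B1 : (y+1)/2 * (ln (y+1) - ln y) >= 1/2).
  { apply Rle_ge. replace (1/2) with ((y+1)/2 * /(y+1)) by (field; lra).
    apply Rmult_le_compat_l; lra. }
  assert (B2 : (y-1)/2 * (ln (y-1) - ln y) >= -1/2).
  { apply Rle_ge. replace (-1/2) with ((y-1)/2 * - /(y-1)) by (field; lra).
    apply Rmult_le_compat_l; lra. }
  assert (Sj : INR (S j) = y - 1) by exact Ey0.
  replace (y - 1 + 1) with y by ring.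
  replace (y + 1 - 1) with y by ring.
  nra.
Qed.

Lemma arch_nonneg x : (forall j : nat, - / (INR j + 1) <= x) -> 0 <= x.
Proof.
  intros H. destruct (Rle_lt_dec 0 x) as [|Hx]; [auto|exfalso].
  set (r := - / x).
  assert (Hr : 0 < r) by (unfold r; apply Ropp_0_gt_lt_contravar, Rinv_lt_0_compat; lra).
  destruct (archimed r) as [Hu _].
  set (z := up r) in *.
  assert (Hz : (0 <= z)%Z) by (apply le_IZR; lra).
  specialize (H (Z.to_nat z)).
  rewrite INR_IZR_INZ, Z2Nat.id in H by auto.
  assert (0 < IZR z + 1) by lra.
  assert (/ (IZR z + 1) < / r) by (apply Rinv_lt_contravar; nra).
  unfold r in H1. rewrite Rinv_opp, Rinv_inv in H1. lra.
Qed.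

Lemma Dc_nonneg m : (1 <= m)%nat -> 0 <= Dc m.
Proof.
  intros Hm. apply arch_nonneg. intros j.
  assert (Hmono : forall i, Dc (m + 2 * i) <= Dc m).
  { induction i as [|i IH].
    - rewrite Nat.mul_0_r, Nat.add_0_r. lra.
    - replace (m + 2 * S i)%nat with (S (S (m + 2 * i))) by lia.
      pose proof (Dc_step (m + 2 * i) ltac:(lia)). lra. }
  assert (Hl := Dc_low (m + 2 * j) ltac:(lia)).
  set (x := INR (m + 2 * j)) in *.
  assert (Hx : INR j + 1 <= x).
  { unfold x. rewrite <- S_INR. apply le_INR. lia. }
  pose proof (pos_INR j). assert (A := ln_diff_ge x (x+1) ltac:(lra) ltac:(lra)).
  replace (1 - (x + 1) / x) with (- / x) in A by (field; lra).
  assert (/ x <= / (INR j + 1)) by (apply Rinv_le_contravar; [pose proof (pos_INR j); lra | lra]).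
  specialize (Hmono j). lra.
Qed.

Lemma bernoulli x k : 0 <= x -> 1 + INR k * x <= (1 + x) ^ k.
Proof.
  intros Hx. induction k as [|k IH].
  - simpl. lra.
  - rewrite S_INR. simpl pow.
    assert (0 <= INR k) by apply pos_INR.
    assert (0 <= INR k * x * x) by (apply Rmult_le_pos; [apply Rmult_le_pos|]; lra).
    nra.
Qed.

Lemma pi_lt4 : PI < 4.
Proof. destruct (PI_ineq 1) as [_ H]. simpl in H. unfold tg_alt, PI_tg in H. simpl in H. lra. Qed.

Definition Zb (n : nat) := INR n / 2 * ln (INR n) - g n - ln PI / 2.

Lemma Sfun_1 n : (2 <= n)%nat -> Sfun n 1 < Zb n.
Proof.
  intros Hn. unfold Sfun, Zb. rewrite Lam_1.
  destruct n as [|j]; [lia|]. replace (S j - 1)%nat with j by lia.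
  assert (Hc := g_conv j). assert (Hr := g_rec j).
  assert (Hj : 1 <= INR j) by (apply (le_INR 1); lia).
  assert (B := bernoulli (/ INR j) j ltac:(left; apply Rinv_0_lt_compat; lra)).
  replace (1 + INR j * / INR j) with 2 in B by (field; lra).
  replace (1 + / INR j) with (INR (S j) / INR j) in B by (rewrite S_INR; field; lra).
  apply ln_le_mono in B; [|lra].
  rewrite ln_pow in B by (apply Rdiv_lt_0_compat; rewrite ?S_INR; lra).
  rewrite ln_div' in B by (rewrite ?S_INR; lra).
  assert (Hpi : ln PI < 2 * ln 2).
  { replace (2 * ln 2) with (ln (2 * 2)) by (rewrite ln_mult; lra).
    apply ln_increasing. apply PI_RGT_0. pose proof pi_lt4. lra. }
  unfold Lam. rewrite S_INR in *.
  nra.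
Qed.

Lemma Sfun_2 n : (4 <= n)%nat -> Sfun n 2 < Zb n.
Proof.
  intros Hn. unfold Sfun, Zb. rewrite Lam_2.
  set (j := (n - 2)%nat). replace n with (S (S j)) by (unfold j; lia).
  replace (S (S j) - 2)%nat with j by lia.
  rewrite g_rec. unfold Lam.
  assert (Hj : 2 <= INR j) by (apply (le_INR 2); unfold j; lia).
  rewrite !S_INR.
  assert (A := ln_diff_ge (INR j + 1 + 1) (INR j) ltac:(lra) ltac:(lra)).
  replace (1 - INR j / (INR j + 1 + 1)) with (2 / (INR j + 2)) in A by (field; lra).
  assert (B : INR j / 2 * (ln (INR j + 1 + 1) - ln (INR j)) >= INR j / (INR j + 2)).
  { apply Rle_ge. replace (INR j / (INR j + 2)) with (INR j / 2 * (2 / (INR j + 2))) by (field; lra).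
    apply Rmult_le_compat_l; lra. }
  assert (C := ln_lt_sub1 (2 * (INR j + 1) / (INR j + 2)) ltac:(apply Rdiv_lt_0_compat; lra)).
  assert (Cne : 2 * (INR j + 1) / (INR j + 2) <> 1).
  { intro E. apply (f_equal (fun t => t * (INR j + 2))) in E.
    replace (2 * (INR j + 1) / (INR j + 2) * (INR j + 2)) with (2 * (INR j + 1)) in E by (field; lra). lra. }
  specialize (C Cne).
  rewrite ln_div', ln_mult in C by lra.
  replace (2 * (INR j + 1) / (INR j + 2) - 1) with (INR j / (INR j + 2)) in C by (field; lra).
  replace (INR j + 2) with (INR j + 1 + 1) in C by ring.
  replace (INR j + 2) with (INR j + 1 + 1) in B by ring. nra.
Qed.

Lemma Sfun_sym n p : (p <= n)%nat -> Sfun n (n - p) = Sfun n p.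
Proof. intros H. unfold Sfun. replace (n - (n - p))%nat with p by lia. ring. Qed.

Lemma T1_half n p : (1 <= p)%nat -> (2*p <= n)%nat -> Sfun n p < Zb n.
Proof.
  revert n. induction p as [p IH] using (well_founded_induction lt_wf). intros n H1 H2.
  destruct (Nat.eq_dec p 1) as [->|N1]; [apply Sfun_1; lia|].
  destruct (Nat.eq_dec p 2) as [->|N2]; [apply Sfun_2; lia|].
  assert (Hs := step2 n (p - 2) ltac:(lia) ltac:(lia)).
  replace (p - 2 + 2)%nat with p in Hs by lia.
  assert (IH' := IH (p - 2)%nat ltac:(lia) n ltac:(lia) ltac:(lia)). lra.
Qed.

Lemma T1_all n p : (2 <= n)%nat -> (1 <= p)%nat -> (p <= n - 1)%nat -> Sfun n p < Zb n.
Proof.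
  intros Hn H1 H2. destruct (Nat.le_gt_cases (2*p) n).
  - apply T1_half; lia.
  - rewrite <- Sfun_sym by lia. apply T1_half; lia.
Qed.

Lemma T2_half n : forall d p, (n / 2 - p = d)%nat -> (1 <= p)%nat -> (2*p <= n)%nat ->
  Sfun n (n / 2) <= Sfun n p.
Proof.
  pose proof (Nat.div_mod n 2 ltac:(lia)). pose proof (Nat.mod_upper_bound n 2 ltac:(lia)).
  intros d. induction d as [d IH] using (well_founded_induction lt_wf). intros p Hd H1 H2.
  destruct (Nat.eq_dec d 0) as [->|N0].
  { replace (n/2)%nat with p by lia. lra. }
  destruct (Nat.eq_dec d 1) as [->|N1].
  { destruct (Nat.Even_or_Odd n) as [[b Hb]|[b Hb]].
    -
      replace (n/2)%nat with b by lia.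
      assert (HD := Dc_nonneg p H1). unfold Dc in HD. unfold Sfun.
      replace (n - p)%nat with (S (S p)) by lia. replace (n - b)%nat with (S p) by lia.
      replace b with (S p) by lia. lra.
    - replace (n/2)%nat with b in * by lia.
      assert (Hs := step2 n p H1 ltac:(lia)).
      unfold Sfun in *. replace (n - (p + 2))%nat with b in Hs by lia.
      replace (p+2)%nat with (n - b)%nat in Hs by lia. lra. }
  assert (Hs := step2 n p H1 ltac:(lia)).
  assert (IH' := IH (d - 2)%nat ltac:(lia) (p + 2)%nat ltac:(lia) ltac:(lia) ltac:(lia)). lra.
Qed.

Lemma T2_all n p : (2 <= n)%nat -> (1 <= p)%nat -> (p <= n - 1)%nat -> Sfun n (n / 2) <= Sfun n p.
Proof.
  intros Hn H1 H2. pose proof (Nat.div_mod n 2 ltac:(lia)). pose proof (Nat.mod_upper_bound n 2 ltac:(lia)).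
  destruct (Nat.le_gt_cases (2*p) n).
  - apply (T2_half n (n/2 - p)); lia.
  - rewrite <- (Sfun_sym n p) by lia. apply (T2_half n (n/2 - (n - p))); lia.
Qed.

Lemma sqrtpow x k : 0 < x -> sqrt x ^ k = exp (INR k * (ln x / 2)).
Proof.
  intros Hx. rewrite <- (Rpower_sqrt x Hx). unfold Rpower at 1.
  rewrite <- Rpower_pow by apply exp_pos. unfold Rpower. rewrite ln_exp. f_equal. field.
Qed.

Lemma F_exp n k : (1 <= k)%nat -> (1 <= n)%nat ->
  sqrt (INR k / INR n) ^ k * sphere_vol k =
  exp (Lam k - INR k / 2 * ln (INR n) + ln 2 + (INR k + 1) / 2 * ln PI).
Proof.
  intros Hk Hn.
  assert (0 < INR k) by (apply lt_0_INR; lia). assert (0 < INR n) by (apply lt_0_INR; lia).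
  rewrite sqrtpow by (apply Rdiv_lt_0_compat; lra).
  rewrite ln_div' by lra.
  unfold sphere_vol. rewrite Nat.add_1_r. rewrite S_INR.
  assert (P := hg_pos (S k) ltac:(lia)).
  unfold Rpower.
  transitivity (exp (INR k * ((ln (INR k) - ln (INR n)) / 2)) *
     (exp (ln 2) * exp ((INR k + 1) / 2 * ln PI) * exp (- ln (half_gamma (S k))))).
  { f_equal. rewrite exp_Ropp, !exp_ln by lra. field. lra. }
  rewrite <- !exp_plus. f_equal. unfold Lam, g. field.
Qed.

Lemma clif_exp n p : (2 <= n)%nat -> (1 <= p)%nat -> (p <= n - 1)%nat ->
  clifford_vol n p = exp (Sfun n p - INR n / 2 * ln (INR n) + 2 * ln 2 + (INR n + 2) / 2 * ln PI).
Proof.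
  intros Hn H1 H2. unfold clifford_vol, prod_sphere_vol, sphere_vol_r.
  rewrite (F_exp n p) by lia. rewrite (F_exp n (n - p)) by lia.
  rewrite <- exp_plus. f_equal. unfold Sfun. rewrite minus_INR by lia. field.
Qed.

Lemma sv2_exp n : 2 * sphere_vol n = exp (2 * ln 2 + (INR n + 1) / 2 * ln PI - g n).
Proof.
  unfold sphere_vol. rewrite Nat.add_1_r. rewrite S_INR.
  assert (P := hg_pos (S n) ltac:(lia)).
  unfold Rpower.
  transitivity (exp (ln 2) * exp (ln 2) * exp ((INR n + 1) / 2 * ln PI) * exp (- ln (half_gamma (S n)))).
  { rewrite exp_Ropp, !exp_ln by lra. field. lra. }
  rewrite <- !exp_plus. f_equal. unfold g. field.
Qed.

Theorem mainTheorem13 (n p : nat) (hn : (2 <= n)%nat) (hp1 : (1 <= p)%nat)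
  (hp2 : (p <= n - 1)%nat) :
  2 * sphere_vol n > clifford_vol n p /\
  clifford_vol n p >=
    prod_sphere_vol (n / 2) (sqrt (INR (n / 2) / INR n))
                    ((n + 1) / 2) (sqrt (INR ((n + 1) / 2) / INR n)).
Proof.
  pose proof (Nat.div_mod n 2 ltac:(lia)). pose proof (Nat.mod_upper_bound n 2 ltac:(lia)).
  pose proof (Nat.div_mod (n+1) 2 ltac:(lia)). pose proof (Nat.mod_upper_bound (n+1) 2 ltac:(lia)).
  split.
  - rewrite clif_exp, sv2_exp by lia. apply Rlt_gt, exp_increasing.
    assert (T := T1_all n p hn hp1 hp2). unfold Zb in T. lra.
  - replace ((n + 1) / 2)%nat with (n - n / 2)%nat by lia.
    change (prod_sphere_vol (n / 2) (sqrt (INR (n / 2) / INR n)) (n - n / 2)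
              (sqrt (INR (n - n / 2) / INR n))) with (clifford_vol n (n / 2)).
    rewrite !clif_exp by lia. apply Rle_ge, exp_le_mono.
    assert (T := T2_all n p hn hp1 hp2). lra.
Qed.
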